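(* Let $Y$ be a Peano continuum without cut points. For any point $x\in Y$ and any $\epsilon>0$ there is $\delta>0$ such that $Y\setminus B(x,\epsilon)$ is contained in a single component of $Y\setminus B(x,\delta)$.
   Context: A Peano continuum is a compact, connected, locally connected metric space; $B(x,r)$ denotes the open metric ball of radius $r$ about $x$. *)

(* Defs.v *)
From HB Require Import structures.
From mathcomp Require Import all_boot all_order all_algebra.
From mathcomp Require Import all_classical all_reals all_analysis.
Set Implicit Arguments. Unset Strict Implicit. Unset Printing Implicit Defensive.
Import Order.TTheory GRing.Theory Num.Theory.
Local Open Scope classical_set_scope.
Local Open Scope ring_scope.

Definition locally_connected {T : topologicalType} :=
  forall (x : T) (U : set T), nbhs x U ->
    exists V : set T, [/\ open V, connected V, V x & V `<=` U].

Definition peano_continuum {R : realType} (T : metricType R) :=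
  [/\ compact [set: T], connected [set: T] & @locally_connected T].

Definition cut_point {T : topologicalType} (x : T) :=
  ~ connected ([set: T] `\ x).

(* Main.v *)
Require Import Defs.
From HB Require Import structures.
From mathcomp Require Import all_boot all_order all_algebra.
From mathcomp Require Import all_classical all_reals all_analysis.
From mathcomp Require Import lra.
Import Order.TTheory GRing.Theory Num.Theory.
Local Open Scope classical_set_scope.
Local Open Scope ring_scope.

Definition pt_of (T : Type) (a : T) : Type := T.
Arguments pt_of {T} a.
HB.instance Definition _ (T : topologicalType) (a : T) := Topological.on (pt_of a).
HB.instance Definition _ (T : topologicalType) (a : T) := isPointed.Build (pt_of a) a.
Lemma compact_cover_np (T : topologicalType) (a : T) (A : set T) :
  compact A -> cover_compact A.
Proof.
move=> cA; have h := @compact_cover (pt_of a).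
have : @compact (pt_of a) A by []. by rewrite h.
Qed.

Section helpers.
Context {R : realType} {T : metricType R}.

Lemma mball_open (x : T) (e : R) : open (ball x e).
Proof.
rewrite openE => y; rewrite ballEmdist /= => xy.
rewrite /interior.
have r0 : 0 < e - mdist x y by rewrite subr_gt0.
apply: filterS (nbhsx_ballx y _ r0) => z; rewrite ballEmdist /= => yz.
apply: (le_lt_trans (metric_triangle x y z)).
by rewrite -ltrBrDl.
Qed.

Lemma loc_conn (lc : @locally_connected T) (z : T) (s : R) : 0 < s ->
  exists V : set T, [/\ open V, connected V, V z & V `<=` ball z s].
Proof. by move=> s0; apply: lc; exact: nbhsx_ballx. Qed.

Lemma extend (x b : T) (C V : set T) (r : R) : 0 < r ->
  connected C -> C b -> C `<=` ~` ball x r ->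
  connected V -> V b -> V `<=` ball b (r / 2) ->
  connected (C `|` V) /\ C `|` V `<=` ~` ball x (r / 2).
Proof.
move=> r0 cC Cb CK cV Vb Vs; split.
  by apply: connectedU => //; exists b.
move=> w [Cw|Vw].
  move=> bw; apply: (CK w Cw); apply: (le_ball _ bw).
  lra.
move=> xw; apply: (CK b Cb).
rewrite [r]splitr; apply: (ball_triangle xw).
exact: ball_sym (Vs w Vw).
Qed.

Lemma delta_exists (eps : R) (rad : T -> R) (s : seq T) : 0 < eps ->
  (forall i, i \in s -> 0 < rad i) ->
  exists d, [/\ 0 < d, d <= eps & forall i, i \in s -> d <= rad i].
Proof.
move=> e0; elim: s => [|j s IH] H.
  by exists eps; split.
have [d [d0 de ds]] : exists d, [/\ 0 < d, d <= eps & forall i, i \in s -> d <= rad i].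
  by apply: IH => i iS; apply: H; rewrite inE iS orbT.
have rj : 0 < rad j by apply: H; rewrite inE eqxx.
exists (Order.min d (rad j)); split.
- by rewrite lt_min d0 rj.
- by rewrite ge_min de.
- move=> i; rewrite inE => /orP [/eqP ->|iS]; rewrite ge_min.
    by rewrite lexx orbT.
  by rewrite ds.
Qed.

End helpers.

Theorem lemma4p4 (R : realType) (T : metricType R) :
  peano_continuum T ->
  (forall p : T, ~ cut_point p) ->
  forall (x : T) (eps : R), 0 < eps ->
  exists delta : R, 0 < delta /\
    exists y : T,
      ~` ball x eps `<=` connected_component (~` ball x delta) y.
Proof.
move=> [cT _ lc] nocut x eps eps0.
have Ac : connected ([set: T] `\ x) by apply: contrapT; exact: nocut.
have [[a Ka]|K0] := pselect (exists a, ~ ball x eps a); last first.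
  exists eps; split => //; exists x => z Kz; exfalso; apply: K0; by exists z.
pose good b := exists C (r : R),
  [/\ 0 < r, connected C, C a, C b & C `<=` ~` ball x r].
have goodnx : forall b, good b -> b <> x.
  move=> b [C [r [r0 _ _ Cb CK]]] bx; apply: (CK b Cb); rewrite bx.
  exact: ballxx.
have allgood : forall b, b <> x -> good b.
  have GE : [set b | good b] = [set: T] `\ x.
    apply: Ac.
    - exists a; exists [set a], eps; split => //; first exact: connected1.
      by move=> z ->.
    - exists [set b | good b].
        rewrite openE => b [C [r [r0 cC Ca Cb CK]]].
        have r20 : 0 < r / 2 by rewrite divr_gt0.
        have [V [oV cV Vb Vs]] := loc_conn lc b _ r20.
        rewrite /interior; apply: filterS (open_nbhs_nbhs (conj oV Vb)).
        move=> z Vz.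
        have [cU UK] := @extend _ _ _ _ _ _ _ r0 cC Cb CK cV Vb Vs.
        exists (C `|` V), (r / 2); split => //; [by left|by right].
      apply/seteqP; split => b.
        by move=> Gb; split; [split => //; exact: goodnx|].
      by move=> [_ ?].
    - exists ([set b | good b] `|` [set x]).
        rewrite -openC openE => z /= nz.
        have nzx : z != x by apply/eqP => zx; apply: nz; right.
        have d0 : 0 < mdist z x by rewrite mdist_gt0.
        have d20 : 0 < mdist z x / 2 by rewrite divr_gt0.
        have disj : forall w, ball z (mdist z x / 2) w -> ~ ball x (mdist z x / 2) w.
          move=> w zw xw.
          have := ball_triangle zw (ball_sym xw); rewrite -splitr ballEmdist /=.
          by rewrite ltxx.
        have [V [oV cV Vz Vs]] := loc_conn lc z _ d20.
        rewrite /interior; apply: filterS (open_nbhs_nbhs (conj oV Vz)).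
        move=> w Vw [Gw|wx].
          apply: nz; left.
          move: Gw => [C [r [r0 cC Ca Cw CK]]].
          exists (C `|` V), (Order.min r (mdist z x / 2)); split.
          + by rewrite lt_min r0 d20.
          + by apply: connectedU => //; exists w.
          + by left.
          + by right.
          + move=> u [Cu|Vu] xu.
              apply: (CK u Cu); apply: (le_ball _ xu); by rewrite ge_min lexx.
            apply: (disj u (Vs u Vu)); apply: (le_ball _ xu).
            by rewrite ge_min lexx orbT.
        apply: (disj x); last exact: ballxx.
        by rewrite wx in Vw; exact: Vs.
      apply/seteqP; split => b.
        by move=> Gb; split; [split => //; exact: goodnx|left].
      by move=> [[_ bx] [//|/= bx']]; exfalso; exact: bx.
  by move=> b bx; have : ([set: T] `\ x) b by []; rewrite -GE.
have strong : forall b, exists t : set T * (set T * R), ~ ball x eps b ->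
    [/\ open t.1, t.1 b, t.1 `<=` t.2.1, t.2.1 a &
      [/\ 0 < t.2.2, connected t.2.1 & t.2.1 `<=` ~` ball x t.2.2]].
  move=> b; have [Kb|nKb] := pselect (~ ball x eps b); last first.
    by exists (setT, (setT, 1)).
  have bx : b <> x by move=> bx; apply: Kb; rewrite bx; exact: ballxx.
  have [C [r [r0 cC Ca Cb CK]]] := allgood b bx.
  have r20 : 0 < r / 2 by rewrite divr_gt0.
  have [V [oV cV Vb Vs]] := loc_conn lc b _ r20.
  have [cU UK] := @extend _ _ _ _ _ _ _ r0 cC Cb CK cV Vb Vs.
  exists (V, (C `|` V, r / 2)) => _ /=; split => //; try by left.
have [f Hf] := choice strong.
have Kcl : closed (~` ball x eps) by rewrite closedC; exact: mball_open.
have Kc := subclosed_compact Kcl cT (@subsetT _ _).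
have {}Kc := @compact_cover_np _ a _ Kc.
have fo : forall i, (~` ball x eps) i -> open (f i).1.
  by move=> i Ki; case: (Hf i Ki).
have fc : ~` ball x eps `<=` cover (~` ball x eps) (fun i => (f i).1).
  by move=> b Kb; exists b => //; case: (Hf b Kb).
have [D' subD cov] := Kc T (~` ball x eps) (fun i => (f i).1) fo fc.
have subD' : forall i, i \in finmap.enum_fset D' -> ~ ball x eps i.
  by move=> i iD; have := subD i iD; rewrite inE.
have [d [d0 de dD]] : exists d, [/\ 0 < d, d <= eps &
    forall i, i \in finmap.enum_fset D' -> d <= (f i).2.2].
  apply: delta_exists => // i iD.
  by case: (Hf i (subD' i iD)) => _ _ _ _ [].
exists d; split => //; exists a => z Kz.
have [i D'i Viz] := cov z Kz.
have Ki := subD' i D'i.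
case: (Hf i Ki) => oV Vi VC Ca [r0 cC CK].
exists (f i).2.1; last exact: VC.
split => //.
move=> w Cw xw; apply: (CK w Cw); exact: (le_ball (dD i D'i) xw).
Qed.
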